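(* There exist $\varepsilon_0>0$ and a function $\delta:(0,\varepsilon_0)\to(0,\infty)$ with $\delta(\varepsilon)\to0$ as $\varepsilon\to0$ such that the following holds. Let $(\varphi_i)_{i\in\mathbb{N}}\subset[0,\infty)$ with $\sum_i\varphi_i=\Phi>0$ and $\varphi_0\ge\varphi_i$ for all $i\in\mathbb{N}$, and suppose that for some $\varepsilon\in(0,\varepsilon_0)$, $$\sum_i\varphi_i^{1/2}-\Phi^{1/2}\le\varepsilon\Phi^{1/2}.$$ Then $\Phi-\varphi_0\le\delta(\varepsilon)\Phi$. *)

(* Defs.v *)
From Stdlib Require Import Reals.
From Coquelicot Require Import Coquelicot.

(* Main.v *)
Require Import Defs.
From Stdlib Require Import Reals.
From Coquelicot Require Import Coquelicot.
From Stdlib Require Import Lra Psatz.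
Open Scope R_scope.

Theorem proposition2p3 :
  exists eps0 : R, 0 < eps0 /\
  exists delta : R -> R,
    (forall e : R, 0 < e < eps0 -> 0 < delta e) /\
    filterlim delta (at_right 0) (locally 0) /\
    forall (phi : nat -> R) (Phi e : R),
      (forall i : nat, 0 <= phi i) ->
      is_series phi Phi ->
      0 < Phi ->
      (forall i : nat, phi i <= phi 0%nat) ->
      0 < e < eps0 ->
      ex_series (fun i : nat => sqrt (phi i)) ->
      Series (fun i : nat => sqrt (phi i)) - sqrt Phi <= e * sqrt Phi ->
      Phi - phi 0%nat <= delta e * Phi.
Proof.
  exists 1. split; [lra|].
  exists (fun e => 1 - / ((1 + e) * (1 + e))).
  split; [|split].
  - intros e He.
    assert (H1 : 1 < (1 + e) * (1 + e)) by nra.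
    assert (H2 : / ((1 + e) * (1 + e)) < 1).
    { rewrite <- Rinv_1. apply Rinv_lt_contravar; lra. }
    lra.
  - apply (filterlim_filter_le_1 (F := locally 0)).
    { apply filter_le_within. }
    replace (locally 0) with (locally (1 - / ((1 + 0) * (1 + 0)))) at 2.
    2:{ f_equal. replace ((1+0)*(1+0)) with 1 by ring. rewrite Rinv_1. ring. }
    apply (ex_derive_continuous (K:=R_AbsRing) (V:=R_NormedModule) (fun e => 1 - / ((1 + e) * (1 + e))) 0).
    auto_derive. nra.
  - intros phi Phi e Hpos Hser HPhi Hmax He Hex Hle.
    set (a := phi 0%nat).
    assert (Ha : 0 < a).
    { destruct (Rle_lt_or_eq_dec 0 a (Hpos 0%nat)) as [H|H]; [exact H|].
      exfalso.
      assert (Hz : forall n, phi n = 0).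
      { intro n. specialize (Hmax n). specialize (Hpos n). unfold a in H. lra. }
      assert (H0 := is_series_scal_r 0 _ _ Hser).
      apply is_series_unique in H0.
      apply is_series_unique in Hser.
      rewrite (Series_ext _ (fun _ => 0) Hz) in Hser.
      rewrite (Series_ext _ (fun _ => 0) (fun n => Rmult_0_r (phi n))) in H0.
      lra. }
    set (r := sqrt a).
    assert (Hr : 0 < r) by (apply sqrt_lt_R0; exact Ha).
    assert (Hs1 : is_series (fun n => phi n * / r) (Phi * / r)).
    { apply is_series_scal_r. exact Hser. }
    assert (Hcmp : Series (fun n => phi n * / r) <= Series (fun i => sqrt (phi i))).
    { apply Series_le; [|exact Hex].
      intro n. split.
      - apply Rmult_le_pos; [apply Hpos|]. left; apply Rinv_0_lt_compat; exact Hr.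
      - assert (Hq : sqrt (phi n) <= r) by (apply sqrt_le_1_alt; apply Hmax).
        assert (Hpp : sqrt (phi n) * sqrt (phi n) = phi n) by (apply sqrt_sqrt; apply Hpos).
        assert (Hq0 : 0 <= sqrt (phi n)) by apply sqrt_pos.
        apply Rmult_le_reg_r with r; [exact Hr|].
        rewrite Rmult_assoc, Rinv_l; [|lra]. nra. }
    rewrite (is_series_unique _ _ Hs1) in Hcmp.
    set (s := sqrt Phi) in *.
    assert (Hs : 0 < s) by (apply sqrt_lt_R0; exact HPhi).
    assert (HPs : s * s = Phi) by (apply sqrt_sqrt; lra).
    assert (Hra : r * r = a) by (apply sqrt_sqrt; lra).
    assert (Hk : Phi * / r <= (1 + e) * s) by lra.
    assert (Hk2 : s <= (1 + e) * r).
    { rewrite <- HPs in Hk.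
      apply Rmult_le_reg_l with (s * / r).
      { apply Rmult_lt_0_compat; [exact Hs|apply Rinv_0_lt_compat; exact Hr]. }
      replace (s * / r * s) with (s * s * / r) by ring.
      replace (s * / r * ((1 + e) * r)) with ((1 + e) * s * (r * / r)) by ring.
      rewrite Rinv_r; lra. }
    assert (Hk3 : Phi <= (1 + e) * (1 + e) * a).
    { rewrite <- HPs, <- Hra. assert (0 <= s) by lra. nra. }
    assert (Hpe : 0 < (1 + e) * (1 + e)) by nra.
    assert (Hk4 : Phi * / ((1 + e) * (1 + e)) <= a).
    { apply Rmult_le_reg_l with ((1 + e) * (1 + e)); [exact Hpe|].
      replace ((1 + e) * (1 + e) * (Phi * / ((1 + e) * (1 + e)))) with
        (Phi * (((1 + e) * (1 + e)) * / ((1 + e) * (1 + e)))) by ring.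
      rewrite Rinv_r; lra. }
    fold a. lra.
Qed.
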